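(* Let $n\ge 1$, let $C_u(v_1),\ldots,C_u(v_n)>0$ and $R_1,\ldots,R_n>0$ be sustainable, i.e. $R_i\le C_u(v_i)$ for all $i$, $\sum_{j\ne i}R_j\le C_d(v_i)$ for all $i$ (for some downlink capacities $C_d(v_i)>0$), and $(n-1)\sum_{i=1}^n R_i\le\sum_{i=1}^n C_u(v_i)$. Then the output $r_{i,j}$ of the algorithm described in the context satisfies the Uplink Capacity Constraint: for every $1\le k\le n$, $$\sum_{j=1}^n r_{k,j} + (n-2)\sum_{i=1}^n r_{i,k} \leq C_u(v_k),$$ i.e. the aggregate uplink rate used by $v_k$ under the two-level broadcast trees described in the context is at most $C_u(v_k)$.
   Context: Sub-stream rate assigning algorithm. Input: $n$, uplink capacities $C_u(v_1),\ldots,C_u(v_n)$ and rates $R_1,\ldots,R_n$. Initialize $r_{i,j}:=0$ for all $1\le i,j\le n$ and $U_i := C_u(v_i)-R_i$ for $1\le i\le n$. Outer loop: for $i=1$ to $n$: set $R'_i := R_i$; inner loop: for $j=1$ to $n$: if $(n-2)R'_i > U_j$ then set $r_{i,j} := U_j/(n-2)$, else set $r_{i,j} := R'_i$; then set $U_j := U_j-(n-2)r_{i,j}$ and $R'_i := R'_i - r_{i,j}$; if $R'_i = 0$, exit the inner loop. Output all $r_{i,j}$. Interpretation: $r_{i,j}$ is the rate of the sub-stream $s_{i,j}$ of site $v_i$'s data stream. Sub-stream $s_{i,i}$ is sent by $v_i$ directly to all $n-1$ other sites (using $(n-1)r_{i,i}$ of $v_i$'s uplink); for $j\neq i$, sub-stream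 $s_{i,j}$ is sent from $v_i$ to $v_j$ (using $r_{i,j}$ of $v_i$'s uplink), and $v_j$ forwards it to the remaining $n-2$ sites (using $(n-2)r_{i,j}$ of $v_j$'s uplink). Hence the total uplink rate used by $v_k$ is $\sum_{j} r_{k,j} + (n-2)\sum_i r_{i,k}$. *)

(* Defs.v *)
From mathcomp Require Import all_boot all_order all_algebra.
Set Implicit Arguments. Unset Strict Implicit. Unset Printing Implicit Defensive.
Import Order.TTheory GRing.Theory Num.Theory.
Local Open Scope ring_scope.

(* Sub-stream rate assigning algorithm, sites indexed by 'I_n
   (site v_{k+1} of the paper is index k : 'I_n). *)
Section Algo.
Variables (R : realFieldType) (n : nat).

(* the real number n - 2 (may be -1 or 0 for n = 1, 2) *)
Definition nm2 : R := n%:R - 2.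

Definition upd_U (U : 'I_n -> R) (j : 'I_n) (v : R) : 'I_n -> R :=
  fun k => if k == j then v else U k.

Definition upd_r (r : 'I_n -> 'I_n -> R) (i j : 'I_n) (v : R)
  : 'I_n -> 'I_n -> R :=
  fun a b => if (a == i) && (b == j) then v else r a b.

Fixpoint inner_loop (i : 'I_n) (Rp : R) (js : seq 'I_n)
    (U : 'I_n -> R) (r : 'I_n -> 'I_n -> R)
    : ('I_n -> R) * ('I_n -> 'I_n -> R) :=
  match js with
  | [::] => (U, r)
  | j :: js' =>
      let rij := if nm2 * Rp > U j then U j / nm2 else Rp in
      let U' := upd_U U j (U j - nm2 * rij) in
      let r' := upd_r r i j rij in
      let Rp' := Rp - rij in
      if Rp' == 0 then (U', r') else inner_loop i Rp' js' U' r'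
  end.

Definition outer_step (Rr : 'I_n -> R)
    (st : ('I_n -> R) * ('I_n -> 'I_n -> R)) (i : 'I_n) :=
  inner_loop i (Rr i) (enum 'I_n) st.1 st.2.

Definition substream_rates (Cu Rr : 'I_n -> R) : 'I_n -> 'I_n -> R :=
  (foldl (outer_step Rr) ((fun k => Cu k - Rr k), (fun _ _ => 0))
         (enum 'I_n)).2.

End Algo.

(* Main.v *)
Require Import Defs.
From mathcomp Require Import all_boot all_order all_algebra.
From mathcomp Require Import ring lra.
Import Order.TTheory GRing.Theory Num.Theory.
Local Open Scope ring_scope.

Section Proof.
Variables (R : realFieldType) (n : nat).

Lemma sum_if_eq (F : 'I_n -> R) (c : 'I_n) :
  \sum_(a < n) (if a == c then F a else 0) = F c.
Proof. by rewrite -big_mkcond big_pred1_eq. Qed.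

Lemma step_facts (Rp Uj : R) :
  0 <= Uj -> 0 <= Rp ->
  let rij := if nm2 R n * Rp > Uj then Uj / nm2 R n else Rp in
  0 <= Uj - nm2 R n * rij /\ 0 <= Rp - rij.
Proof.
move=> HU HR rij; rewrite /rij; set m := nm2 R n.
case: ifP => H.
  have m0 : m != 0 by apply/eqP=> E; move: H; rewrite E mul0r; lra.
  set x := Uj / m.
  have Ex : m * x = Uj by rewrite /x mulrC divfK.
  split; first by rewrite Ex subrr.
  move: H; rewrite -Ex => H; nra.
move/negbT: H; rewrite -leNgt => H; split; lra.
Qed.

Lemma inner_inv (i : 'I_n) (js : seq 'I_n) : forall Rp U r,
  uniq js -> (forall b, b \in js -> r i b = 0) ->
  (forall k, 0 <= U k) -> 0 <= Rp ->
  let res := inner_loop i Rp js U r in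
  [/\ forall k, 0 <= res.1 k,
      forall k, res.1 k + nm2 R n * \sum_(a < n) res.2 a k
                = U k + nm2 R n * \sum_(a < n) r a k,
      \sum_(b < n) res.2 i b <= \sum_(b < n) r i b + Rp &
      forall a b, a != i -> res.2 a b = r a b].
Proof.
elim: js => [|j js IH] Rp U r /= Hu Hz HU HR.
  split=> //; lra.
move: Hu => /andP [jn Hu].
set m := nm2 R n.
set rij := if m * Rp > U j then U j / m else Rp.
have [F1 F2] := @step_facts Rp (U j) (HU j) HR.
rewrite -/m -/rij in F1 F2.
set U' := upd_U U j (U j - m * rij).
set r' := upd_r r i j rij.
have rij0 : r i j = 0 by apply: Hz; rewrite inE eqxx.
have Erp : forall a b, r' a b = r a b + (if (a == i) && (b == j) then rij else 0).
  move=> a b; rewrite /r' /upd_r; case: ifP => [/andP [/eqP -> /eqP ->]|_]; last by rewrite addr0.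
  by rewrite rij0 add0r.
have HU' : forall k, 0 <= U' k.
  by move=> k; rewrite /U' /upd_U; case: ifP.
have C' : forall k, U' k + m * \sum_(a < n) r' a k = U k + m * \sum_(a < n) r a k.
  move=> k; under eq_bigr => x _ do rewrite Erp.
  rewrite big_split /=.
  rewrite /U' /upd_U; case: eqP => [->|kj].
    have -> : \sum_(x < n) (if (x == i) && true then rij else 0) = rij.
      by rewrite -[RHS](sum_if_eq (fun _ => rij) i); apply: eq_bigr => x _; rewrite andbT.
    ring.
  have -> : \sum_(x < n) (if (x == i) && false then rij else 0) = 0.
    by apply: big1 => x _; rewrite andbF.
  by rewrite addr0.
have S' : \sum_(b < n) r' i b = \sum_(b < n) r i b + rij.
  under eq_bigr => y _ do rewrite Erp eqxx /=.
  by rewrite big_split /= sum_if_eq.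
have D' : forall a b, a != i -> r' a b = r a b.
  by move=> a b /negbTE ai; rewrite Erp ai /= addr0.
case: ifP => _.
  split=> //; rewrite S'; lra.
have Hz' : forall b, b \in js -> r' i b = 0.
  move=> b bin; rewrite Erp eqxx /= Hz ?inE ?bin ?orbT //.
  case: eqP => [E|]; last by rewrite addr0.
  by move: jn; rewrite -E bin.
have [A B C D] := IH (Rp - rij) U' r' Hu Hz' HU' F2.
split=> //.
- by move=> k; rewrite B C'.
- move: C; rewrite S'; lra.
- by move=> a b ai; rewrite D // D'.
Qed.

Lemma outer_inv (Cu Rr : 'I_n -> R) (s : seq 'I_n) : forall st,
  (forall k, 0 <= Rr k) -> uniq s ->
  (forall k, [/\ 0 <= st.1 k,
     st.1 k + nm2 R n * \sum_(a < n) st.2 a k = Cu k - Rr k,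
     k \in s -> forall b, st.2 k b = 0 &
     k \notin s -> \sum_(b < n) st.2 k b <= Rr k]) ->
  let res := foldl (outer_step Rr) st s in
  forall k, [/\ 0 <= res.1 k,
     res.1 k + nm2 R n * \sum_(a < n) res.2 a k = Cu k - Rr k &
     \sum_(b < n) res.2 k b <= Rr k].
Proof.
elim: s => [|i s IH] st HR /=.
  move=> _ H k; have [A B _ D] := H k; split=> //; exact: D.
move=> /andP [ins Hu] H.
apply: IH => // k.
rewrite /outer_step.
have Hz : forall b, b \in enum 'I_n -> st.2 i b = 0.
  by move=> b _; have [_ _ C _] := H i; apply: C; rewrite inE eqxx.
have HU : forall k, 0 <= st.1 k by move=> k'; have [] := H k'.
have [A B C D] := @inner_inv i (enum 'I_n) (Rr i) st.1 st.2 (enum_uniq _) Hz HU (HR i).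
have [A0 B0 C0 D0] := H k.
split=> //.
- by rewrite B.
- move=> ks b; rewrite D; last by apply/eqP=> E; move: ins; rewrite -E ks.
  by apply: C0; rewrite inE ks orbT.
- move=> kn; case: (eqVneq k i) => [->|ki].
    have E0 : \sum_(b < n) st.2 i b = 0 by rewrite big1 // => b _; apply: Hz; rewrite mem_enum.
    by move: C; rewrite E0 add0r.
  under eq_bigr => y _ do rewrite D //.
  by apply: D0; rewrite inE negb_or ki.
Qed.

End Proof.

Theorem propositionB5 (R : realFieldType) (n : nat) (Cu Cd Rr : 'I_n -> R) :
  (0 < n)%N ->
  (forall k, 0 < Cu k) ->
  (forall k, 0 < Cd k) ->
  (forall k, 0 < Rr k) ->
  (forall k, Rr k <= Cu k) ->
  (forall i, \sum_(j < n | j != i) Rr j <= Cd i) ->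
  (n%:R - 1) * \sum_(i < n) Rr i <= \sum_(i < n) Cu i ->
  forall k : 'I_n,
    \sum_(j < n) substream_rates Cu Rr k j
      + (n%:R - 2) * \sum_(i < n) substream_rates Cu Rr i k <= Cu k.
Proof.
move=> _ _ _ HR HRC _ _ k.
have HR0 : forall k, 0 <= Rr k by move=> k'; apply: ltW.
have H := @outer_inv R n Cu Rr (enum 'I_n) ((fun k => Cu k - Rr k), (fun _ _ => 0))
  HR0 (enum_uniq _).
have [k'|A B C] := H _ k.
  split=> /=.
  - by rewrite subr_ge0.
  - by rewrite big1 // mulr0 addr0.
  - by [].
  - by rewrite mem_enum.
rewrite /substream_rates.
change (n%:R - 2) with (nm2 R n).
set res := foldl _ _ _ in A B C *.
lra.
Qed.
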